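(* Let $X$ be a finite 2-covered graph of spaces. Then $\chi(\Gamma(X))\le\chi(\Gamma_U(X))$.
   Context: A 2-covered graph of spaces $X$ consists of: a finite connected graph $\Gamma_U(X)$ (the underlying graph), with oriented edges $e$, reversal $\bar e$, and terminal/initial vertices $\tau(e),\iota(e)=\tau(\bar e)$; for each vertex $v$ a finite connected graph $V$ (vertex space); for each edge $e$ a finite connected graph $E=\bar E$ (edge space, possibly a single point); and for each oriented edge $e$ a combinatorial immersion (locally injective graph map) $\tau_e\colon E\looparrowright V$ where $v=\tau(e)$; subject to the 2-covering condition: for each vertex $v$, every edge of $V$ is the image of exactly two edges of $\bigsqcup_{\tau(e)=v}E$. The horizontal subgraph $\Gamma(X)$ is the graph whose vertices are the vertices of all vertex spaces and with one edge for each edge $e$ of $\Gamma_U(X)$ and each vertex $x$ of $E$, joining $\tau_{\bar e}(x)$ to $\tau_e(x)$. $\chi$ denotes Euler characteristic. *)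

(* Defs.v *)
From HB Require Import structures.
From mathcomp Require Import all_boot all_order all_algebra.
Set Implicit Arguments. Unset Strict Implicit. Unset Printing Implicit Defensive.

(* A finite graph (loops and multiple edges allowed): each (unoriented)
   edge e has an arbitrarily chosen reference orientation with endpoints
   msrc e and mdst e.  The oriented edges ("darts") are pairs (e, b) :
   (e, true) is e with its reference orientation, (e, false) is its reversal
   \bar e. *)
Record mgraph := MGraph {
  mV : finType;
  mE : finType;
  msrc : mE -> mV;
  mdst : mE -> mV }.

Definition dart (G : mgraph) := (mE G * bool)%type.
Definition drev (G : mgraph) (d : dart G) : dart G := (d.1, ~~ d.2).
Definition dhead (G : mgraph) (d : dart G) : mV G :=
  if d.2 then mdst d.1 else msrc d.1.

Definition euler (G : mgraph) : int := (#|mV G|)%:Z - (#|mE G|)%:Z.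

Definition adj (G : mgraph) : rel (mV G) := fun x y =>
  [exists e : mE G, ((msrc e == x) && (mdst e == y)) ||
                    ((msrc e == y) && (mdst e == x))].
Definition connected (G : mgraph) : Prop :=
  0 < #|mV G| /\ forall x y : mV G, connect (@adj G) x y.

(* Combinatorial map data: vertices to vertices, each edge to an edge
   together with an orientation flag (true = reference orientations agree). *)
Record gmap (G H : mgraph) := GMap {
  gmv : mV G -> mV H;
  gme : mE G -> mE H * bool }.

Definition gmd (G H : mgraph) (f : gmap G H) (d : dart G) : dart H :=
  ((gme f d.1).1, if (gme f d.1).2 then d.2 else ~~ d.2).

Definition is_graph_map (G H : mgraph) (f : gmap G H) : Prop :=
  forall d : dart G, dhead (gmd f d) = gmv f (dhead d).

Definition immersion (G H : mgraph) (f : gmap G H) : Prop :=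
  is_graph_map f /\
  forall d1 d2 : dart G, dhead d1 = dhead d2 -> gmd f d1 = gmd f d2 -> d1 = d2.

(* A graph of spaces: underlying graph, vertex spaces, edge spaces (one per
   unoriented edge, so E = \bar E), and for each oriented edge d a map
   tau_d : E_{d.1} -> V_{tau(d)}. *)
Record graph_of_spaces := GoS {
  gU : mgraph;
  gVs : mV gU -> mgraph;
  gEs : mE gU -> mgraph;
  gtau : forall d : dart gU, gmap (gEs d.1) (gVs (dhead d)) }.

Arguments gVs : clear implicits.
Arguments gEs : clear implicits.
Arguments gtau : clear implicits.

Definition two_covered (X : graph_of_spaces) : Prop :=
  [/\ connected (gU X),
      (forall v, connected (gVs X v)),
      (forall a, connected (gEs X a)),
      (forall d, immersion (gtau X d)) &
      (* every edge p of V_v is the image of exactly two edges of the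
         disjoint union of the E_e over oriented edges e with tau(e) = v *)
      forall p : {v : mV (gU X) & mE (gVs X v)},
        \sum_(d : dart (gU X))
          #|[pred x : mE (gEs X d.1) |
              Tagged (fun v => mE (gVs X v)) (gme (gtau X d) x).1 == p]| = 2].

Definition hsrc (X : graph_of_spaces)
  (ax : {a : mE (gU X) & mV (gEs X a)}) : {v : mV (gU X) & mV (gVs X v)} :=
  Tagged (fun v => mV (gVs X v)) (gmv (gtau X (tag ax, false)) (tagged ax)).
Definition hdst (X : graph_of_spaces)
  (ax : {a : mE (gU X) & mV (gEs X a)}) : {v : mV (gU X) & mV (gVs X v)} :=
  Tagged (fun v => mV (gVs X v)) (gmv (gtau X (tag ax, true)) (tagged ax)).

Definition horizontal (X : graph_of_spaces) : mgraph :=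
  @MGraph {v : mV (gU X) & mV (gVs X v)} {a : mE (gU X) & mV (gEs X a)}
    (@hsrc X) (@hdst X).

(* Main.v *)
Require Import Defs.
From mathcomp Require Import all_boot all_order all_algebra.
Import Order.TTheory GRing.Theory Num.Theory.

Lemma card_sig_pred (I : finType) (J : I -> finType) (Q : forall i, pred (J i)) :
  #|[pred z : {i : I & J i} | Q (tag z) (tagged z)]| = \sum_i #|[pred x | Q i x]|.
Proof.
rewrite -sum1_card.
transitivity (\sum_i \sum_(x | Q i x) 1).
  by rewrite sig_big_dep.
by apply: eq_bigr => i _; rewrite sum1_card.
Qed.

Fixpoint reach (G : mgraph) (x0 : mV G) (n : nat) : {set mV G} :=
  if n is m.+1 then reach G x0 m :|: [set y | [exists z in reach G x0 m, @adj G z y]]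
  else [set x0].

Lemma reach_path (G : mgraph) (x0 : mV G) p z n :
  path (@adj G) z p -> z \in reach G x0 n -> last z p \in reach G x0 (n + size p).
Proof.
elim: p z n => [|y p IH] z n /=; first by rewrite addn0.
move=> /andP[Hzy Hp] Hz; rewrite addnS -addSn; apply: IH => //=.
rewrite inE; apply/orP; right; rewrite inE; apply/existsP; exists z.
by rewrite Hz.
Qed.

Lemma bfs_height (G : mgraph) (x0 : mV G) :
  (forall y, connect (@adj G) x0 y) ->
  exists h : mV G -> nat, forall x, x != x0 ->
    exists d : mE G * bool, (@dhead G d == x) && (h (@dhead G (@drev G d)) < h x).
Proof.
move=> Hc.
have Hex : forall y, exists n, y \in reach G x0 n.
  move=> y; have /connectP[p Hp ->] := Hc y.
  exists (0 + size p); apply: reach_path => //=; exact: set11.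
exists (fun y => ex_minn (Hex y)) => x Hx.
case: ex_minnP => m Hm Hmin.
case: m Hm Hmin => [|m] /= Hm Hmin; first by rewrite inE (negbTE Hx) in Hm.
move: Hm; rewrite inE => /orP[Hm|]; first by have := Hmin _ Hm; rewrite ltnn.
rewrite inE => /existsP[z /andP[Hz Hzx]].
have Hhz : ex_minn (Hex z) <= m.
  by case: ex_minnP => k _ Hk; apply: Hk.
move: Hzx => /existsP[e /orP[/andP[/eqP Hs /eqP Hd]|/andP[/eqP Hs /eqP Hd]]].
- exists (e, true); rewrite /dhead /drev /= Hd eqxx /= Hs; exact: Hhz.
- exists (e, false); rewrite /dhead /drev /= Hs eqxx /= Hd; exact: Hhz.
Qed.

Lemma key_end (G K : mgraph) (f : gmap K G) (h : mV G -> nat) (e : mE K)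
  (x : mV G) (c : bool) :
  is_graph_map f ->
  @dhead G ((gme f e).1, c) = x -> h (@dhead G ((gme f e).1, ~~c)) < h x ->
  let b := h (gmv f (msrc e)) < h (gmv f (mdst e)) in
  gmd f (e, b) = ((gme f e).1, c) /\ gmv f (@dhead K (e,b)) = x /\
  h (gmv f (@dhead K (e, ~~b))) < h x.
Proof.
move=> GM Hx Hp b.
have Hb : h (gmv f (@dhead K (e, ~~b))) <= h (gmv f (@dhead K (e,b))).
  by rewrite /b /dhead /=; case: ltnP => /= H; [exact: ltnW | exact: H].
have G1 := GM (e, b); have G2 := GM (e, ~~b).
clearbody b; move: G1 G2 Hx Hp Hb; rewrite /gmd /=.
case: (gme f e) => t o /=.
case: o; case: c; case: b => /= G1 G2 Hx Hp Hb; rewrite -?G1 -?G2;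
  subst x; rewrite ?negbK in G1 G2 *; rewrite -?G1 -?G2 in Hb *;
  try by split.
all: try by exfalso; move: (leq_trans Hp Hb); rewrite ltnn.
Qed.

Lemma exists_min (K : finType) (F : K -> nat) : 0 < #|K| ->
  exists y, forall y', F y <= F y'.
Proof.
move=> /card_gt0P[y0 _].
have Hex : exists n, [exists y, F y == n] by exists (F y0); apply/existsP; exists y0.
case: (ex_minnP Hex) => m /existsP[y /eqP Hy] Hmin.
exists y => y'; rewrite Hy; apply: Hmin; apply/existsP; exists y'; exact: eqxx.
Qed.

Lemma local_count (G : mgraph) (I : finType) (E : I -> mgraph)
  (f : forall i, gmap (E i) G) :
  connected G -> (forall i, 0 < #|mV (E i)|) -> (forall i, immersion (f i)) ->
  (forall t : mE G, \sum_i #|[pred e : mE (E i) | (gme (f i) e).1 == t]| = 2) ->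
  #|I| + 2 * (#|mV G|).-1 <= \sum_i #|mV (E i)|.
Proof.
move=> [G0 Gc] Ene Fim Fcov.
have /card_gt0P[x0 _] := G0.
have [h Hh] := @bfs_height G x0 (Gc x0).
pose par x := [pick d : mE G * bool |
   (@dhead G d == x) && (h (@dhead G (@drev G d)) < h x)].
have Hpar : forall x t c, par x = Some (t, c) ->
    @dhead G (t, c) = x /\ h (@dhead G (t, ~~c)) < h x.
  move=> x t c; rewrite /par; case: pickP => // [[t1 c1]] /= /andP[/eqP H1 H2] [<- <-].
  by split.
have Hpar0 : forall x, x != x0 -> exists t c, par x = Some (t, c).
  move=> x /Hh [d Hd]; rewrite /par; case: pickP => [[t c] _|/(_ d)].
    by exists t, c.
  by rewrite Hd.
pose isPar t := [exists x, (x != x0) && [exists c, par x == Some (t, c)]].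
pose L := {i : I & mE (E i)}.
pose phi (z : L) := (gme (f (tag z)) (tagged z)).1.
pose b0 i (e : mE (E i)) := h (gmv (f i) (msrc e)) < h (gmv (f i) (mdst e)).
pose cend i (e : mE (E i)) := @dhead (E i) (e, b0 i e).
pose ymin i := [pick y : mV (E i) |
   [forall y', h (gmv (f i) y) <= h (gmv (f i) y')]].
have Hymin : forall i, exists y, ymin i = Some y /\
    forall y', h (gmv (f i) y) <= h (gmv (f i) y').
  move=> i; have [y Hy] := exists_min _ (fun y => h (gmv (f i) y)) (Ene i).
  rewrite /ymin; case: pickP => [y' /forallP Hy'|/(_ y)].
    by exists y'.
  by move/negP; case; apply/forallP.
pose T := {i : I & mV (E i)}.
pose g (u : I + L) : option T := match u with
  | inl i => omap (fun y => Tagged (fun j => mV (E j)) y) (ymin i)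
  | inr z => Some (Tagged (fun j => mV (E j)) (cend (tag z) (tagged z)))
  end.
pose A := [pred u : I + L | if u is inr z then isPar (phi z) else true].
have Hlift : forall i (e : mE (E i)), isPar (gme (f i) e).1 ->
    exists x c, [/\ par x = Some ((gme (f i) e).1, c),
      gmd (f i) (e, b0 i e) = ((gme (f i) e).1, c),
      gmv (f i) (cend i e) = x &
      h (gmv (f i) (@dhead (E i) (e, ~~ b0 i e))) < h x].
  move=> i e /existsP[x /andP[_ /existsP[c /eqP Hc]]].
  have [H1 H2] := Hpar _ _ _ Hc.
  have [K1 [K2 K3]] := @key_end G (E i) (f i) h e x c (proj1 (Fim i)) H1 H2.
  by exists x, c.
have ginj : {in A &, injective g}.
  move=> [i|[i e]] [j|[j e']]; rewrite !inE /g /= => HA HB.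
  - have [y [Hy _]] := Hymin i; have [y' [Hy' _]] := Hymin j.
    rewrite Hy Hy' /= => /Some_inj H; have ei : i = j := congr1 tag H; by rewrite ei.
  - have [y [Hy Hmin]] := Hymin i; rewrite Hy /= => /Some_inj H.
    have ei : i = j := congr1 tag H; subst j.
    have Hye := eq_from_Tagged H.
    have [x [c [_ _ V1 L1]]] := Hlift i e' HB.
    have := Hmin (@dhead (E i) (e', ~~ b0 i e')).
    by rewrite Hye V1 leqNgt L1.
  - have [y [Hy Hmin]] := Hymin j; rewrite Hy /= => /Some_inj H.
    have ei : i = j := congr1 tag H; subst j.
    have Hye := eq_from_Tagged H.
    have [x [c [_ _ V1 L1]]] := Hlift i e HA.
    have := Hmin (@dhead (E i) (e, ~~ b0 i e)).
    by rewrite -Hye V1 leqNgt L1.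
  - move=> /Some_inj H.
    have ei : i = j := congr1 tag H; subst j.
    have Hc := eq_from_Tagged H.
    have [x [c [P1 M1 V1 _]]] := Hlift i e HA.
    have [x' [c' [P2 M2 V2 _]]] := Hlift i e' HB.
    have exx : x = x' by rewrite -V1 -V2 Hc.
    rewrite -exx P1 in P2; case: P2 => Ht Hcc.
    have Hd : gmd (f i) (e, b0 i e) = gmd (f i) (e', b0 i e') by rewrite M1 M2 Ht Hcc.
    have := (proj2 (Fim i)) _ _ Hc Hd.
    move=> Hee; have /= -> := congr1 fst Hee; by [].
have HAT : #|A| <= #|{: {i : I & mV (E i)}}|.
  rewrite -(card_in_imset ginj).
  apply: (@leq_trans #|[set~ (None : option {i : I & mV (E i)})]|); last by rewrite cardsC1 card_option.
  apply: subset_leq_card; apply/subsetP => o /imsetP[u Hu ->]; rewrite !inE.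
  case: u Hu => [i|z] _ //=.
  by have [y [-> _]] := Hymin i.
have HT : #|{: {i : I & mV (E i)}}| = \sum_i #|mV (E i)|.
  have Hc := @card_sig_pred I (fun i => _) (fun i (_ : mV (E i)) => true).
  apply: etrans (etrans _ Hc) _; first by apply: eq_card.
  by apply: eq_bigr => i _; apply: eq_card.
have HA : #|A| = #|I| + #|[pred z : L | isPar (phi z)]|.
  rewrite -[#|A|]sum1_card big_sumType /=; congr (_ + _).
    by apply: etrans (sum1_card _); apply: eq_bigl.
  by apply: etrans (sum1_card _); apply: eq_bigl.
have HL : #|[pred z : L | isPar (phi z)]| = 2 * #|[pred t | isPar t]|.
  rewrite -sum1_card (partition_big phi isPar) //=.
  rewrite mulnC -sum_nat_const; apply: eq_bigr => t Ht.
  have Hc := @card_sig_pred I (fun i => _) (fun i (e : mE (E i)) => (gme (f i) e).1 == t).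
  rewrite -(Fcov t); apply: etrans (etrans _ Hc) _; last first.
    by apply: eq_bigr => i _; apply: eq_card.
  rewrite -sum1_card; apply: eq_bigl => z /=.
  rewrite !inE -/(phi z); case: eqP => [->|]; first by rewrite Ht.
  by rewrite andbF.
have HP : (#|mV G|).-1 <= #|[pred t | isPar t]|.
  pose pe x := omap fst (par x).
  have peinj : {in predC1 x0 &, injective pe}.
    move=> x y /= Px Py.
    have [t [c Pc]] := Hpar0 x Px; have [t' [c' Pc']] := Hpar0 y Py.
    rewrite /pe Pc Pc' /= => -[Ht]; subst t'.
    have [Hx1 Hx2] := Hpar _ _ _ Pc; have [Hy1 Hy2] := Hpar _ _ _ Pc'.
    move: Hx1 Hx2 Hy1 Hy2; clear Pc Pc'; case: c; case: c' => /= <- H2 <- H4 //.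
      by move: (ltn_trans H2 H4); rewrite ltnn.
    by move: (ltn_trans H2 H4); rewrite ltnn.
  rewrite -(cardC1 x0) -(card_in_imset peinj).
  rewrite -(@card_imset _ _ Some [pred t | isPar t]); last by move=> ? ? [].
  apply: subset_leq_card; apply/subsetP => o /imsetP[x Px ->].
  have [t [c Pc]] := Hpar0 x Px.
  rewrite /pe Pc /=; apply/imsetP; exists t => //.
  rewrite inE; apply/existsP; exists x; apply/andP; split; first exact: Px.
  apply/existsP; exists c.
  by rewrite Pc.
rewrite -HT; apply: leq_trans HAT; rewrite HA HL leq_add2l leq_mul2l.
by rewrite HP orbT.
Qed.

Lemma sum_pred1 (I : finType) (F : I -> nat) :
  (forall i, 0 < F i) -> \sum_i F i = \sum_i (F i).-1 + #|I|.
Proof.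
move=> HF; rewrite -sum1_card -big_split /=.
by apply: eq_bigr => i _; rewrite addn1 prednK.
Qed.

Definition trmap (U : mgraph) (Vs : mV U -> mgraph) (K : mgraph) (w v : mV U)
  (e : w = v) (f : gmap K (Vs w)) : gmap K (Vs v) :=
  eq_rect w (fun u => gmap K (Vs u)) f v e.

Lemma trmap_imm (U : mgraph) (Vs : mV U -> mgraph) (K : mgraph) (w v : mV U)
  (e : w = v) (f : gmap K (Vs w)) : immersion f -> immersion (@trmap U Vs K w v e f).
Proof. by case: v / e. Qed.

Lemma trmap_gme (U : mgraph) (Vs : mV U -> mgraph) (K : mgraph) (w v : mV U)
  (e : w = v) (f : gmap K (Vs w)) (x : mE K) (t : mE (Vs v)) :
  (Tagged (fun u => mE (Vs u)) (gme f x).1 == Tagged (fun u => mE (Vs u)) t) =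
  ((gme (@trmap U Vs K w v e f) x).1 == t).
Proof. by case: v / e t => t; rewrite eq_Tagged. Qed.

Lemma vertex_ineq (X : graph_of_spaces) (v : mV (gU X)) : two_covered X ->
  2 * (#|mV (gVs X v)|).-1 <=
  \sum_(d : dart (gU X) | @dhead (gU X) d == v) (#|mV (gEs X d.1)|).-1.
Proof.
case=> cU cV cE imm cov.
pose Pv : {pred dart (gU X)} := [pred d | @dhead (gU X) d == v].
pose I := {d : dart (gU X) | d \in Pv}.
have ev : forall i : I, @dhead (gU X) (val i) = v := fun i => eqP (valP i).
pose f (i : I) := @trmap (gU X) (gVs X) (gEs X (val i).1) _ _ (ev i) (gtau X (val i)).
have Hcov : forall t : mE (gVs X v),
    \sum_(i : I) #|[pred e : mE (gEs X (val i).1) | (gme (f i) e).1 == t]| = 2.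
  move=> t; rewrite -(cov (Tagged (fun u => mE (gVs X u)) t)).
  rewrite (bigID (mem Pv)) /= [X in _ = _ + X]big1 ?addn0; last first.
    move=> d Hd; apply: eq_card0 => x; rewrite !inE.
    apply/negP => /eqP /(congr1 tag) /= Ht.
    by move: Hd; rewrite inE Ht eqxx.
  rewrite [RHS]big_sub; apply: eq_bigr => i _; apply: eq_card => x.
  by rewrite !inE trmap_gme.
have := @local_count (gVs X v) I (fun i => gEs X (val i).1) f (cV v)
  (fun i => proj1 (cE _)) (fun i => @trmap_imm _ _ _ _ _ (ev i) _ (imm _)) Hcov.
rewrite sum_pred1; last by move=> i; exact: (proj1 (cE _)).
rewrite addnC leq_add2r => H; apply: (leq_trans H); apply: eq_leq.
rewrite -(big_sub Pv (fun d => (#|mV (gEs X d.1)|).-1)).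
by apply: eq_bigl => d; rewrite inE.
Qed.

Lemma card_tag_sum (I : finType) (J : I -> finType) :
  #|{: {i : I & J i}}| = \sum_i #|J i|.
Proof.
have Hc := @card_sig_pred I J (fun i (_ : J i) => true).
apply: etrans (etrans _ Hc) _; first by apply: eq_card.
by apply: eq_bigr => i _; apply: eq_card.
Qed.

Lemma sum_bool2 (n : nat) : \sum_(b : bool) n = 2 * n.
Proof. by rewrite sum_nat_const card_bool mulnC. Qed.

Lemma sum_dart (T : finType) (F : T -> nat) :
  \sum_(p : T * bool) F p.1 = 2 * \sum_a F a.
Proof.
rewrite -(pair_bigA _ (fun a (_ : bool) => F a)) big_distrr /=.
by apply: eq_bigr => a _; exact: sum_bool2.
Qed.

Lemma sums_ineq (X : graph_of_spaces) : two_covered X ->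
  \sum_v (#|mV (gVs X v)|).-1 <= \sum_a (#|mV (gEs X a)|).-1.
Proof.
move=> H2.
have := @leq_sum (mV (gU X)) (index_enum _) predT _ _ (fun v _ => @vertex_ineq X v H2).
rewrite -big_distrr /=.
have -> : \sum_(v : mV (gU X)) \sum_(d : dart (gU X) | @dhead (gU X) d == v)
     (#|mV (gEs X d.1)|).-1 = \sum_(d : dart (gU X)) (#|mV (gEs X d.1)|).-1.
  rewrite [RHS](partition_big (@dhead (gU X)) predT) //=.
have -> : \sum_(d : dart (gU X)) (#|mV (gEs X d.1)|).-1 =
    2 * \sum_a (#|mV (gEs X a)|).-1 := sum_dart _ _.
by rewrite leq_pmul2l.
Qed.

From mathcomp Require Import ring.
Local Open Scope ring_scope.

Theorem lemma4p2 (X : graph_of_spaces) :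
  two_covered X -> euler (horizontal X) <= euler (gU X).
Proof.
move=> H2; have S := @sums_ineq X H2.
case: H2 => cU cV cE _ _.
rewrite /euler /=.
rewrite (@card_tag_sum _ (fun v => mV (gVs X v))) (@card_tag_sum _ (fun a => mV (gEs X a))).
rewrite (@sum_pred1 _ (fun v => #|mV (gVs X v)|)); last by move=> v; exact: (proj1 (cV v)).
rewrite (@sum_pred1 _ (fun a => #|mV (gEs X a)|)); last by move=> a; exact: (proj1 (cE a)).
move: S; set s1 := \sum__ _; set s2 := \sum__ _ => S.
rewrite -subr_ge0.
have -> : (#|mV (gU X)|%:Z - #|mE (gU X)|%:Z) - ((s1 + #|mV (gU X)|)%N%:Z - (s2 + #|mE (gU X)|)%N%:Z)
   = s2%:Z - s1%:Z by rewrite !PoszD; ring.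
by rewrite subr_ge0 lez_nat.
Qed.
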